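(* Consider one group of $p'$ PEs holding locally sorted string arrays with concatenation $S'$, partitioned into $r$ buckets using character-based regular sampling with sampling factor $v>0$. Then every bucket $B^j$ contains at most $\bigl(1+\frac rv\bigr)\frac{\|S'\|}{r}+\bigl(1+\frac{v+1}{r}\bigr)p'\hat{\ell}$ characters.
   Context: $\hat{\ell}$ is the length of the longest string and $\|X\|$ the number of characters of a set of strings $X$; $r$ divides $p'$. Character-based regular sampling with factor $v$: with $\omega'=\|S'\|/(p'(v+1))$, PE $i$ (holding sorted array $S_i'$) draws $\lceil\|S_i'\|/\omega'\rceil-1$ equally spaced positions in its character array, shifts each position by at most $\hat{\ell}-1$ to the beginning of the string containing it, and takes these strings as samples; if fewer than $p'(v+1)$ samples result, the first PEs draw one additional sample each. The samples $V$ are sorted and splitters $f_j=V[j|V|/r-1]$ for $0<j<r$ are chosen, $f_0=-\infty$, $f_r=\infty$. Buckets are $B^j=\bigcup_i\{s\in S_i':f_j<s\le f_{j+1}\}$. *)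

(* Defs.v *)
From HB Require Import structures.
From mathcomp Require Import all_boot all_order all_algebra.
Set Implicit Arguments. Unset Strict Implicit. Unset Printing Implicit Defensive.
Import Order.TTheory GRing.Theory Num.Theory.

Section Strings.
Context {d : Order.disp_t} {T : orderType d}.

Definition str_le (s t : seq T) : bool := @Order.le _ (seqlexi T) s t.
Definition str_lt (s t : seq T) : bool := @Order.lt _ (seqlexi T) s t.

Definition chars (X : seq (seq T)) : nat := sumn (map size X).

Definition maxlen (X : seq (seq T)) : nat := \max_(s <- X) size s.

(* the string of X containing the character at position pos of the
   concatenated character array of X (i.e. position pos shifted to the
   beginning of the string containing it) *)
Fixpoint str_at (X : seq (seq T)) (pos : nat) : seq T :=
  match X with
  | [::] => [::]
  | s :: X' => if pos < size s then s else str_at X' (pos - size s)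
  end.
End Strings.

Section Sampling.
Context {d : Order.disp_t} {T : orderType d} (p' : nat) (S : 'I_p' -> seq (seq T)).

Definition concatS : seq (seq T) := flatten [seq S i | i <- enum 'I_p'].

Variable v : nat.

Definition nsamp : nat := p' * v.+1.

(* omega' = ||S'|| / (p'(v+1)).
   PE i draws ceil(||S_i'|| / omega') - 1 = ceil(||S_i'|| p'(v+1) / ||S'||) - 1
   regular samples. *)
Definition reg_count (i : 'I_p') : nat :=
  ((chars (S i) * nsamp + chars concatS - 1) %/ chars concatS).-1.

(* the k-th equally spaced position: floor(k * omega') *)
Definition reg_pos (k : nat) : nat := (k * chars concatS) %/ nsamp.

Definition reg_samples (i : 'I_p') : seq (seq T) :=
  [seq str_at (S i) (reg_pos k) | k <- iota 1 (reg_count i)].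

(* number of missing samples; the first [deficit] PEs draw one more each *)
Definition deficit : nat := nsamp - \sum_(i < p') reg_count i.

(* xpos i : the position of the additional sample drawn by PE i *)
Definition samples (xpos : 'I_p' -> nat) : seq (seq T) :=
  flatten [seq reg_samples i ++
               (if (i < deficit)%N then [:: str_at (S i) (xpos i)] else [::])
          | i <- enum 'I_p'].

Definition sortedV (xpos : 'I_p' -> nat) : seq (seq T) :=
  sort str_le (samples xpos).

Variable r : nat.

(* f_j = V[j |V| / r - 1]  (used for 0 < j < r) *)
Definition splitter (xpos : 'I_p' -> nat) (j : nat) : seq T :=
  nth [::] (sortedV xpos) (j * (size (sortedV xpos) %/ r)).-1.

(* s in B^j  iff  f_j < s <= f_{j+1}, with f_0 = -oo and f_r = +oo *)
Definition in_bucket (xpos : 'I_p' -> nat) (j : nat) (s : seq T) : bool :=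
  ((j == 0) || str_lt (splitter xpos j) s) &&
  ((j.+1 == r) || str_le s (splitter xpos j.+1)).

Definition bucket (xpos : 'I_p' -> nat) (j : nat) : seq (seq T) :=
  [seq s <- concatS | in_bucket xpos j s].
End Sampling.

(* Main.v *)
Require Import Defs.
From HB Require Import structures.
From mathcomp Require Import all_boot all_order all_algebra.
From mathcomp Require Import zify ring lra.
Import Order.TTheory GRing.Theory Num.Theory.
Set Implicit Arguments. Unset Strict Implicit. Unset Printing Implicit Defensive.

Lemma count_interval L R c : L <= R -> R <= c ->
  count (fun t => L <= t < R) (iota 0 c) = R - L.
Proof.
move=> hLR hRc.
have -> : c = L + ((R - L) + (c - R)) by lia.
rewrite iotaD; rewrite iotaD !count_cat add0n.
rewrite (@eq_in_count _ _ pred0 (iota 0 L)); last first.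
  by move=> t; rewrite mem_iota /=; lia.
rewrite (@eq_in_count _ _ predT (iota L (R - L))); last first.
  by move=> t; rewrite mem_iota /=; lia.
rewrite (@eq_in_count _ _ pred0 (iota (L + (R - L)) (c - R))); last first.
  by move=> t; rewrite mem_iota /=; lia.
by rewrite !count_pred0 count_predT size_iota; lia.
Qed.

Definition cntA (N K X : nat) := count (fun k => k * N < X) (iota 1 K).

Lemma cntA_all N K X : K * N < X -> cntA N K X = K.
Proof.
move=> h; rewrite /cntA (@eq_in_count _ _ predT) ?count_predT ?size_iota //.
move=> k; rewrite mem_iota => /andP[_ hk] /=.
apply: leq_ltn_trans h; apply: leq_mul => //; lia.
Qed.

Lemma cntA_up N K X : 0 < X -> cntA N K X * N < X.
Proof.
move=> hX; elim: K => [|K IH]; first by rewrite /cntA /=.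
rewrite /cntA -[K.+1]addn1 iotaD count_cat /= -/(cntA N K X) addn0 add1n.
case: (ltnP (K.+1 * N) X) => h; last by rewrite addn0.
have : cntA N K X <= K by rewrite /cntA (leq_trans (count_size _ _)) ?size_iota.
move=> hc; apply: leq_ltn_trans h; rewrite addn1; apply: leq_mul => //; lia.
Qed.

Lemma cntA_low N K X : X <= K.+1 * N -> X <= (cntA N K X).+1 * N.
Proof.
elim: K => [|K IH] hX; first by rewrite /cntA /=.
have mono : cntA N K X <= cntA N K.+1 X.
  by rewrite /cntA -[K.+1]addn1 iotaD count_cat leq_addr.
case: (leqP X (K.+1 * N)) => h.
  apply: leq_trans (IH h) _; apply: leq_mul => //.
by rewrite cntA_all.
Qed.

Lemma count_diff (A : Type) (a b : pred A) s : (forall x, b x -> a x) ->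
  count (fun x => a x && ~~ b x) s = count a s - count b s.
Proof.
move=> hba; elim: s => //= x s IH.
have hc : count b s <= count a s by apply: sub_count.
case ha: (a x); case hb: (b x) => //=; rewrite ?IH; try lia.
by move: (hba x hb); rewrite ha.
Qed.

Section Str.
Context {d : Order.disp_t} {T : orderType d}.

Lemma str_le_trans : transitive (@str_le d T).
Proof. move=> y x z; exact: (@le_trans _ (seqlexi T)). Qed.
Lemma str_le_refl : reflexive (@str_le d T).
Proof. move=> x; exact: (@lexx _ (seqlexi T)). Qed.

Lemma str_at_mem (X : seq (seq T)) t : t < chars X -> str_at X t \in X.
Proof.
elim: X t => [|s X IH] t //=.
rewrite /chars /= -/(chars X) => h.
case: ifP => h1; first by rewrite mem_head.
rewrite in_cons IH ?orbT //; lia.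
Qed.

Lemma str_at_mono (X : seq (seq T)) t1 t2 : sorted str_le X ->
  t1 <= t2 -> t2 < chars X -> str_le (str_at X t1) (str_at X t2).
Proof.
elim: X t1 t2 => [|s X IH] t1 t2 //= hs h12.
rewrite /chars /= -/(chars X) => h2.
have hX : sorted str_le X by move: hs; case: X {IH h2} => //= x X /andP[].
case: ifP => h1; case: ifP => h3.
- exact: str_le_refl.
- have /allP := order_path_min str_le_trans hs; apply; apply: str_at_mem; lia.
- lia.
- apply: IH => //; lia.
Qed.

Lemma charsP (P : pred (seq T)) (X : seq (seq T)) :
  chars (filter P X) = count (fun t => P (str_at X t)) (iota 0 (chars X)).
Proof.
elim: X => [|s X IH] //=.
rewrite /chars /= -/(chars X) iotaD count_cat add0n.
rewrite (@eq_in_count _ _ (fun _ => P s) (iota 0 (size s))); last first.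
  by move=> t; rewrite mem_iota /= => ht; have -> : t < size s by lia.
rewrite -[in iota (size s) _](addn0 (size s)) iotaDl count_map.
rewrite (@eq_count _ _ (fun t => P (str_at X t))); last first.
  by move=> t /=; rewrite ltnNge leq_addr /= addKn.
rewrite -IH; case: (P s); rewrite ?count_predT ?count_pred0 ?size_iota //.
Qed.
End Str.

Lemma convex_interval (e : pred nat) c :
 (forall t1 t2 t3, t1 <= t2 -> t2 <= t3 -> e t1 -> e t3 -> e t2) ->
 (forall t, e t -> t < c) -> (exists t, e t) ->
 exists L R, [/\ L <= R, R <= c & forall t, e t = (L <= t < R)].
Proof.
move=> hconv hc ex.
have ub : forall t, e t -> t <= c by move=> t /hc /ltnW.
case: (ex_minnP ex) => L eL minL.
case: (ex_maxnP ex ub) => Rm eR maxR.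
exists L, Rm.+1; split.
- by rewrite ltnW // ltnS minL.
- exact: hc.
- move=> t; apply/idP/idP.
    by move=> et; rewrite minL //= ltnS maxR.
  move=> /andP[h1 h2]; apply: (hconv L t Rm) => //.
Qed.

Lemma arith_final (R L n N x y : nat) : 0 < L -> y <= x -> y * N < L * n ->
  R * n <= x.+1 * N -> (R - L) * n <= (x - y + 1) * N.
Proof. move=> *; nia. Qed.

Lemma ceil_facts c n N : 0 < N -> 0 < n ->
  let rc := ((c * n + N - 1) %/ N).-1 in
  c * n <= rc.+1 * N /\ (forall k, k <= rc -> k * N < c * n \/ k = 0).
Proof.
move=> hN hn rc.
have h1 := ltn_ceil (c * n + N - 1) hN.
have h2 := leq_trunc_div (c * n + N - 1) N.
rewrite /rc; move: h1 h2; set q := (c * n + N - 1) %/ N => h1 h2.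
case: q h1 h2 => [|q] h1 h2 /=.
  split; first nia. move=> k; rewrite leqn0 => /eqP ->; by right.
split; first nia.
move=> k hk; case: k hk => [|k] hk; first by right.
left; nia.
Qed.

Section PE.
Context {d : Order.disp_t} {T : orderType d}.

Lemma pe_bound (X : seq (seq T)) (P : pred (seq T)) N n :
  sorted str_le X ->
  (forall s1 s2 s3, str_le s1 s2 -> str_le s2 s3 -> P s1 -> P s3 -> P s2) ->
  0 < N -> 0 < n ->
  chars (filter P X) * n <=
  (count P [seq str_at X (k * N %/ n) | k <- iota 1 ((chars X * n + N - 1) %/ N).-1] + 1) * N.
Proof.
move=> hs hP hN hn.
have [hrc1 hrc2] := ceil_facts (chars X) hN hn.
move: hrc1 hrc2.
set c := chars X; set rc := ((c * n + N - 1) %/ N).-1 => hrc1 hrc2.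
rewrite charsP count_map.
set e := fun t => P (str_at X t).
pose e' := fun t => (t < c) && e t.
have -> : count e (iota 0 c) = count e' (iota 0 c).
  by apply: eq_in_count => t; rewrite mem_iota /e' /= => ->.
have -> : count (fun k => P (str_at X (k * N %/ n))) (iota 1 rc) =
          count (fun k => e' (k * N %/ n)) (iota 1 rc).
  apply: eq_in_count => k; rewrite mem_iota => hk.
  have hk' : k * N %/ n < c.
    rewrite ltn_divLR //; case: (hrc2 k); lia.
  by rewrite /e' hk'.
have conv : forall t1 t2 t3, t1 <= t2 -> t2 <= t3 -> e' t1 -> e' t3 -> e' t2.
  move=> t1 t2 t3 h12 h23 /andP[c1 e1] /andP[c3 e3].
  rewrite /e' (leq_ltn_trans h23 c3) /=.
  apply: (hP _ _ _ _ _ e1 e3).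
    apply: str_at_mono => //; exact: (leq_ltn_trans h23 c3).
  exact: str_at_mono.
have bnd : forall t, e' t -> t < c by move=> t /andP[].
case: (boolP [exists t : 'I_c, e' t]) => [/existsP [t0 ht0]|hne]; last first.
  rewrite (@eq_in_count _ _ pred0); first by rewrite count_pred0.
  move=> t; rewrite mem_iota add0n => /andP[_ ht] /=.
  apply/negP => et; move/negP: hne; apply; apply/existsP; by exists (Ordinal ht).
have [L [R [hLR hRc hLRe]]] := convex_interval conv bnd (ex_intro (fun t => e' t) (val t0) ht0).
rewrite (eq_count hLRe) count_interval //.
rewrite (@eq_count _ _ (fun k => (k * N < R * n) && ~~ (k * N < L * n))); last first.
  move=> k /=; rewrite hLRe leq_divRL // ltn_divLR // -leqNgt andbC //.
rewrite count_diff; last by move=> k h; apply: leq_trans h _; rewrite leq_mul2r hLR orbT.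
rewrite -!/(cntA N rc _).
have hlow : R * n <= (cntA N rc (R * n)).+1 * N.
  apply: cntA_low; apply: leq_trans hrc1; by rewrite leq_mul2r hRc orbT.
have mono : cntA N rc (L * n) <= cntA N rc (R * n).
  apply: sub_count => k h; apply: leq_trans h _; by rewrite leq_mul2r hLR orbT.
case: (posnP L) => [->|hL].
  have -> : cntA N rc (0 * n) = 0.
    by rewrite mul0n /cntA (@eq_count _ _ pred0) ?count_pred0.
  by rewrite !subn0 addn1.
apply: arith_final => //.
apply: cntA_up; by rewrite muln_gt0 hL hn.
Qed.
End PE.

Lemma final_nat O B N n m r v p' l : 0 < r -> 0 < v -> 0 < p' ->
  n = p' * v.+1 -> m * r = n -> O * n <= (m + p') * N -> B <= O + l ->
  r * v * B <= (v + r) * N + (r + v + 1) * v * p' * l.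
Proof.
move=> hr hv hp hn hm hO hB.
have h1 : O * n * r <= (m + p') * N * r by rewrite leq_mul2r hO orbT.
have h2 : (m + p') * N * r = p' * ((v.+1 + r) * N) by rewrite hn in hm; nia.
have h3 : p' * (O * v.+1 * r) <= p' * ((v.+1 + r) * N).
  rewrite -h2; apply: leq_trans h1; rewrite hn; nia.
rewrite leq_pmul2l // in h3.
have h4 : v.+1 * (r * v * O) <= v.+1 * ((v + r) * N).
  apply: leq_trans (_ : v * (O * v.+1 * r) <= _); first nia.
  apply: leq_trans (_ : v * ((v.+1 + r) * N) <= _); first by rewrite leq_mul2l h3 orbT.
  nia.
rewrite leq_pmul2l // in h4.
have h5 : r * v * B <= r * v * O + r * v * l by rewrite -mulnDr leq_mul2l hB orbT.
apply: leq_trans h5 _; apply: leq_add => //; nia.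
Qed.

Section RatPart.
Local Open Scope ring_scope.
Lemma final_rat (B N r v p' l : nat) : (0 < r)%N -> (0 < v)%N ->
  (r * v * B <= (v + r) * N + (r + v + 1) * v * p' * l)%N ->
  (B%:R <= (1 + r%:R/v%:R) * N%:R / r%:R + (1 + (v.+1)%:R / r%:R) * p'%:R * l%:R :> rat).
Proof.
move=> hr hv /(congr1 (fun b : bool => b)) h.
have hr' : (0 : rat) < r%:R by rewrite ltr0n.
have hv' : (0 : rat) < v%:R by rewrite ltr0n.
have H : (r * v * B)%:R <= ((v + r) * N + (r + v + 1) * v * p' * l)%:R :> rat
  by rewrite ler_nat h.
rewrite !(natrD, natrM) in H.
have -> : (1 + r%:R/v%:R) * N%:R / r%:R + (1 + (v.+1)%:R / r%:R) * p'%:R * l%:R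
   = ((v%:R + r%:R) * N%:R + (r%:R + v%:R + 1) * v%:R * p'%:R * l%:R) / (r%:R * v%:R) :> rat.
  rewrite -addn1 natrD; field.
  by apply/andP; split; rewrite lt0r_neq0.
rewrite ler_pdivlMr ?mulr_gt0 //.
apply: le_trans (le_trans _ H) _; first by rewrite le_eqVlt; apply/orP; left; apply/eqP; ring.
by rewrite le_eqVlt; apply/orP; left; apply/eqP; ring.
Qed.
End RatPart.

Lemma sumn_mapE (I : Type) (f : I -> nat) s : sumn (map f s) = \sum_(i <- s) f i.
Proof. by elim: s => [|x s IH]; rewrite ?big_nil ?big_cons //= IH. Qed.

Lemma sum_mulr (I : Type) (F : I -> nat) c s :
  \sum_(i <- s) (F i * c) = (\sum_(i <- s) F i) * c.
Proof. by elim: s => [|x s IH]; rewrite ?big_nil ?big_cons // IH mulnDl. Qed.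

Lemma sum_ineq (I : Type) (O a : I -> nat) n N s :
  (forall i, O i * n <= (a i + 1) * N) ->
  (\sum_(i <- s) O i) * n <= (\sum_(i <- s) a i + size s) * N.
Proof.
move=> h; elim: s => [|x s IH]; rewrite ?big_nil ?big_cons //=.
have := h x; nia.
Qed.

Lemma sum_enum_lt p D : D <= p -> \sum_(i <- enum 'I_p) (i < D) = D.
Proof.
move=> hD; rewrite -sumn_mapE (sumn_count (fun i : 'I_p => i < D)).
rewrite -(count_map val (fun k => k < D)) val_enum_ord.
rewrite (@eq_count _ _ (fun k => 0 <= k < D)) ?count_interval ?subn0 //.
Qed.

Lemma sum_enum_ord p (F : 'I_p -> nat) : \sum_(i <- enum 'I_p) F i = \sum_(i < p) F i.
Proof. by rewrite big_enum. Qed.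

Section S.
Context {d : Order.disp_t} {T : orderType d}.

Lemma chars_cat (X Y : seq (seq T)) : chars (X ++ Y) = chars X + chars Y.
Proof. by rewrite /chars map_cat sumn_cat. Qed.

Lemma chars_flatten (ss : seq (seq (seq T))) : chars (flatten ss) = \sum_(X <- ss) chars X.
Proof. by elim: ss => [|X ss IH]; rewrite ?big_nil ?big_cons //= chars_cat IH. Qed.

Lemma chars_filter_le (P : pred (seq T)) X : chars (filter P X) <= chars X.
Proof.
elim: X => [|s X IH] //=.
case: (P s) => /=; rewrite /chars /= -/(chars (filter P X)) -/(chars X); lia.
Qed.

Lemma chars_filter_split (B P Q : pred (seq T)) X :
  (forall s, B s -> P s || Q s) ->
  chars (filter B X) <= chars (filter P X) + chars (filter Q X).
Proof.
move=> h; elim: X => [|s X IH] //=.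
case hB: (B s); case hP: (P s); case hQ: (Q s);
  rewrite /chars /= -/(chars (filter B X)) -/(chars (filter P X)) -/(chars (filter Q X)); try lia.
by have := h s hB; rewrite hP hQ.
Qed.

Lemma chars_pred1 (X : seq (seq T)) f : uniq X ->
  chars (filter (fun s => s == f) X) <= maxlen X.
Proof.
move=> hu; case: (boolP (f \in X)) => hf.
  rewrite (filter_pred1_uniq hu hf) /chars /= addn0.
  have := @leq_bigmax_seq _ X predT (fun s : seq T => size s) f hf isT; by [].
rewrite (@eq_in_filter _ _ pred0) ?filter_pred0 //.
by move=> s hs /=; apply/negP => /eqP es; move: hf; rewrite -es hs.
Qed.

Lemma str_lt_le_false (x y : seq T) : str_lt x y -> str_le y x -> False.
Proof.
rewrite /str_lt /str_le => h1 h2.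
by have := lt_le_trans h1 h2; rewrite ltxx.
Qed.

Lemma countV (V : seq (seq T)) r m j : sorted str_le V -> size V = r * m -> j < r ->
  count (fun s => ((j == 0) || str_lt (nth [::] V (j * m).-1) s) &&
                  ((j.+1 == r) || str_lt s (nth [::] V (j.+1 * m).-1))) V <= m.
Proof.
move=> hs hV hj.
set P0 := (X in count X V).
rewrite -[X in count P0 X](mkseq_nth [::] V) /mkseq count_map.
set P := (X in count X _).
apply: (@leq_trans (count (fun k => j * m <= k < j.+1 * m) (iota 0 (size V)))); last first.
  rewrite count_interval ?hV; first lia.
    by rewrite leq_mul2r leqnSn orbT.
  by rewrite leq_mul2r hj orbT.
rewrite (@eq_in_count _ P (fun k => (k < size V) && P k)); last first.
  by move=> k; rewrite mem_iota /= => ->.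
apply: sub_count => k /andP[hk /andP[h1 h2]].
have tr := @str_le_trans d T; have rf := @str_le_refl d T.
apply/andP; split.
  move: h1; case: eqP => [-> _|hj0 /= h1]; first by rewrite mul0n.
  rewrite leqNgt; apply/negP => hlt.
  move: h1 => /(str_lt_le_false) ; apply.
  apply: (sorted_leq_nth tr rf) => //=; rewrite ?inE; try lia.
  rewrite hV; have : j * m <= r * m by rewrite leq_mul2r ltnW ?orbT.
  lia.
move: h2; case: eqP => [hjr _|hjr h2].
  by move: hk; rewrite hV hjr.
rewrite ltnNge; apply/negP => hge.
move: h2 => /(str_lt_le_false); apply.
apply: (sorted_leq_nth tr rf) => //=; rewrite ?inE; try lia.
Qed.
End S.

Unset Implicit Arguments.

Theorem theorem18 (d : Order.disp_t) (T : orderType d) (p' : nat)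
  (S : 'I_p' -> seq (seq T)) (r v : nat) (xpos : 'I_p' -> nat) :
  (0 < r)%N -> (r %| p')%N -> (0 < v)%N ->
  (forall i : 'I_p', sorted str_le (S i)) ->
  uniq (concatS S) ->
  (forall i : 'I_p', (i < deficit S v)%N -> (xpos i < chars (S i))%N) ->
  forall j : 'I_r,
    ((chars (bucket S v r xpos j))%:R <=
       (1 + r%:R / v%:R) * (chars (concatS S))%:R / r%:R
       + (1 + (v.+1)%:R / r%:R) * p'%:R * (maxlen (concatS S))%:R :> rat)%R.
Proof.
move=> hr hdiv hv hsort huniq _ j.
apply: final_rat => //.
set N := chars (concatS S).
set B := chars (bucket S v r xpos j).
have hBN : B <= N by apply: chars_filter_le.
case: (posnP N) => [hN0|hN].
  have -> : B = 0 by lia.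
  by rewrite muln0.
have hsumN : N = \sum_(i <- enum 'I_p') chars (S i).
  by rewrite /N /concatS chars_flatten big_map.
case: (posnP p') => [hp0|hp].
  have e0 : enum 'I_p' = [::] by apply: size0nil; rewrite size_enum_ord hp0.
  by move: hN; rewrite hsumN e0 big_nil.
set n := nsamp p' v.
have hn : 0 < n by rewrite /n /nsamp muln_gt0 hp.
have hrcA : forall i, reg_count S v i * N <= chars (S i) * n.
  move=> i; have [_ h] := ceil_facts (chars (S i)) hN hn.
  have := h _ (leqnn _); rewrite /reg_count -/N -/n.
  by case => [/ltnW //|->]; rewrite mul0n.
have hrcB : forall i, chars (S i) * n <= (reg_count S v i).+1 * N.
  by move=> i; have [h _] := ceil_facts (chars (S i)) hN hn; rewrite /reg_count -/N -/n.
set SR := \sum_(i <- enum 'I_p') reg_count S v i.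
have hSR1 : SR <= n.
  rewrite -(leq_pmul2r hN) /SR -sum_mulr.
  apply: (@leq_trans (\sum_(i <- enum 'I_p') chars (S i) * n)); first exact: leq_sum.
  by rewrite sum_mulr -hsumN mulnC.
have hSR2 : n <= SR + p'.
  rewrite -(leq_pmul2r hN).
  apply: (@leq_trans (\sum_(i <- enum 'I_p') chars (S i) * n)).
    by rewrite sum_mulr -hsumN mulnC.
  apply: leq_trans (leq_sum _ (fun i _ => hrcB i)) _.
  rewrite sum_mulr; apply: leq_mul => //.
  rewrite (eq_bigr (fun i => reg_count S v i + 1)); last by move=> i _; rewrite addn1.
  rewrite big_split /= /SR; apply: leq_add => //.
  by rewrite sum1_size size_enum_ord.
have hdef : deficit S v = n - SR by rewrite /deficit /SR sum_enum_ord.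
have hsizeV : size (sortedV S v xpos) = n.
  rewrite /sortedV size_sort /samples size_flatten /shape -map_comp sumn_mapE.
  rewrite (eq_bigr (fun i => reg_count S v i + (i < deficit S v))); last first.
    by move=> i _ /=; rewrite size_cat size_map size_iota; case: ifP.
  rewrite big_split /= -/SR sum_enum_lt; last by rewrite hdef; lia.
  rewrite hdef; lia.
set V := sortedV S v xpos.
set m := size V %/ r.
have hVm : size V = r * m.
  rewrite /m mulnC divnK // hsizeV /n /nsamp; exact: dvdn_mulr.
have hsV : sorted str_le V.
  apply: sort_sorted => x y; exact: (@le_total _ (seqlexi T)).
set f1 := nth [::] V (j * m).-1.
set f2 := nth [::] V (j.+1 * m).-1.
pose P := fun s => (((j : nat) == 0) || str_lt f1 s) && ((j.+1 == r) || str_lt s f2).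
have hcount : count P V <= m by apply: countV.
have hperm : perm_eq V (samples S v xpos) by rewrite /V /sortedV perm_sort.
have hsa : \sum_(i <- enum 'I_p') count P (reg_samples S v i) <= count P V.
  rewrite ((permP hperm) P) /samples count_flatten -map_comp sumn_mapE.
  by apply: leq_sum => i _ /=; rewrite count_cat leq_addr.
have hconv : forall s1 s2 s3, str_le s1 s2 -> str_le s2 s3 -> P s1 -> P s3 -> P s2.
  move=> s1 s2 s3 h12 h23 /andP[l1 _] /andP[_ u3]; apply/andP; split.
    case/orP: l1 => [->//|l1]; apply/orP; right; exact: (lt_le_trans l1 h12).
  case/orP: u3 => [->//|u3]; apply/orP; right; exact: (le_lt_trans h23 u3).
have hpe : forall i, chars (filter P (S i)) * n <=
                     (count P (reg_samples S v i) + 1) * N.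
  move=> i; exact: pe_bound.
set O := chars (filter P (concatS S)).
have hOsum : O = \sum_(i <- enum 'I_p') chars (filter P (S i)).
  by rewrite /O /concatS filter_flatten chars_flatten -map_comp big_map.
have hO : O * n <= (m + p') * N.
  rewrite hOsum; apply: leq_trans (sum_ineq _ hpe) _.
  rewrite size_enum_ord leq_mul2r; apply/orP; right.
  rewrite leq_add2r; exact: leq_trans hsa hcount.
have hB : B <= O + maxlen (concatS S).
  rewrite /B /bucket -/O.
  apply: (leq_trans (@chars_filter_split d T (in_bucket S v r xpos j) P (fun s => s == f2) (concatS S) _)); last first.
    by rewrite leq_add2l; apply: chars_pred1.
  move=> s /andP[lo up]; rewrite /P lo /=.
  move: up; rewrite /splitter -/V -/m -/f2 => /orP[h|h]; first by rewrite h.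
  move: h; rewrite /str_le le_eqVlt => /orP[/eqP ->|h]; first by rewrite eqxx !orbT.
  by apply/orP; left; apply/orP; right; exact: h.
apply: (final_nat (O := O) (n := n) (m := m)) => //.
by rewrite mulnC -hVm hsizeV.
Qed.
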